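(* Let $d$ be odd and $s$ even with $s\mid d-1$, and let $G=\langle\tau\rangle\rtimes\langle\sigma\rangle$ with $\tau$ of order $d$, $\sigma$ of order $s$, conjugation by $\sigma$ an automorphism of $\langle\tau\rangle$ of order exactly $s$, and $\sigma^{s/2}\tau\sigma^{-s/2}=\tau^{-1}$. With the left ideals $M_1,\dots,M_4$ of $\mathbb{Z}[G]$ and the maps $d_i,h_i$ defined in the context: (1) the sequence $0\to M_1\xrightarrow{d_1}M_2\xrightarrow{d_2}M_3\xrightarrow{d_3}M_4\to0$ is exact; (2) $h_2$ is a well-defined $\mathbb{Z}[G]$-module homomorphism; (3) the prism conditions hold at all four modules: $h_1d_1=d\cdot\mathrm{id}_{M_1}$, $d_1h_1+h_2d_2=d\cdot\mathrm{id}_{M_2}$, $d_2h_2+h_3d_3=d\cdot\mathrm{id}_{M_3}$, $d_3h_3=d\cdot\mathrm{id}_{M_4}$.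
   Context: $\theta_j\in\{1,\dots,d-1\}$ by $\sigma^j\tau\sigma^{-j}=\tau^{\theta_j}$. In $\mathbb{Z}[G]$: $T_\tau=\sum_{i=0}^{d-1}\tau^i$, $T_\sigma=\sum_{j=0}^{s-1}\sigma^j$, $\mathcal{B}=(1-\sigma^{s/2})\tau^{\frac{d+1}{2}}\sum_{j=0}^{\frac{s}{2}-1}(\sum_{i=0}^{\theta_j-1}\tau^i)\sigma^j$. Left ideals (left $\mathbb{Z}[G]$-modules): $M_1=\mathbb{Z}[G]T_\sigma T_\tau$, $M_2=\mathbb{Z}[G]T_\sigma$, $M_3=\mathbb{Z}[G]\mathcal{B}$, $M_4=\mathbb{Z}[G]\mathcal{B}T_\tau$. Maps: $d_1:M_1\to M_2$ inclusion; $d_2:M_2\to M_3$, $x\mapsto x(1-\tau)$ (note $T_\sigma(1-\tau)\in\mathbb{Z}[G]\mathcal{B}$); $d_3:M_3\to M_4$, $x\mapsto xT_\tau$; $h_1:M_2\to M_1$, $x\mapsto xT_\tau$; $h_2:M_3\to M_2$, $h_2(x\mathcal{B})=x\sum_{i=0}^{d-1}(\frac{d-1}{2}-i)\tau^{i}\tau^{\frac{d+1}{2}}T_\sigma$ for $x\in\mathbb{Z}[G]$; $h_3:M_4\to M_3$ inclusion. *)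

(* Defs.v *)
From HB Require Import structures.
From mathcomp Require Import all_boot all_order all_algebra all_fingroup.
Set Implicit Arguments. Unset Strict Implicit. Unset Printing Implicit Defensive.
Import GRing.Theory.
Local Open Scope ring_scope.

(* The integral group ring Z[gT] of a finite group gT: integer-valued
   functions on gT, with pointwise addition (the zmodType structure of
   {ffun gT -> int}) and convolution product. *)
Definition ZG (gT : finGroupType) := {ffun gT -> int}.

Definition gbasis (gT : finGroupType) (g : gT) : ZG gT :=
  [ffun x => ((x == g) : nat)%:Z].

Definition gr_mul (gT : finGroupType) (a b : ZG gT) : ZG gT :=
  [ffun g => \sum_(h : gT) a h * b (h^-1 * g)%g].

Notation "a ** b" := (gr_mul a b) (at level 40, left associativity).

Definition inLI (gT : finGroupType) (x a : ZG gT) : Prop :=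
  exists y : ZG gT, a = y ** x.

Section Elements.
Variables (gT : finGroupType) (tau sigma : gT) (d s : nat) (theta : nat -> nat).

Definition Ttau : ZG gT := \sum_(i < d) gbasis (tau ^+ i)%g.
Definition Tsig : ZG gT := \sum_(j < s) gbasis (sigma ^+ j)%g.
Definition Bel : ZG gT :=
  (gbasis 1%g - gbasis (sigma ^+ s./2)%g) **
  (gbasis (tau ^+ (d.+1)./2)%g **
   \sum_(j < s./2) ((\sum_(i < theta j) gbasis (tau ^+ i)%g) ** gbasis (sigma ^+ j)%g)).
(* C = sum_{i<d} ((d-1)/2 - i) tau^i tau^{(d+1)/2} T_sigma, so h2(xB) = xC *)
Definition Cel : ZG gT :=
  \sum_(i < d) ((gbasis (tau ^+ i)%g ** gbasis (tau ^+ (d.+1)./2)%g ** Tsig)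
                   *~ (((d.-1)./2)%:Z - i%:Z)).
End Elements.

(* Main.v *)
Require Import Defs.
From HB Require Import structures.
From mathcomp Require Import all_boot all_order all_algebra all_fingroup.
From mathcomp Require Import all_solvable zify.
From Stdlib Require Import ClassicalEpsilon.
Set Implicit Arguments. Unset Strict Implicit. Unset Printing Implicit Defensive.
Import GRing.Theory Num.Theory.
Local Open Scope ring_scope.

Section GR.
Variable gT : finGroupType.
Implicit Types a b c : ZG gT.

Lemma grmulE a b x : (a ** b) x = \sum_(h : gT) a h * b (h^-1 * x)%g.
Proof. by rewrite ffunE. Qed.

Lemma gbasisE (g x : gT) : gbasis g x = ((x == g) : nat)%:Z.
Proof. by rewrite ffunE. Qed.

Lemma gr_mulA : associative (@gr_mul gT).
Proof.
move=> a b c; apply/ffunP => x; rewrite grmulE [RHS]grmulE.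
under eq_bigr => k _ do rewrite grmulE big_distrr /=.
under [RHS]eq_bigr => k _ do rewrite grmulE big_distrl /=.
rewrite [RHS]exchange_big /=; apply: eq_bigr => h _.
rewrite [RHS](reindex_inj (mulgI h)) /=.
apply: eq_bigr => k _; rewrite mulKg mulrA; congr (_ * _).
by rewrite invMg mulgA.
Qed.

Lemma gr_mul1r : left_id (gbasis 1%g) (@gr_mul gT).
Proof.
move=> a; apply/ffunP => x; rewrite grmulE (bigD1 1%g) //= gbasisE eqxx invg1 mul1g mul1r.
rewrite big1 ?addr0 // => h /negPf nh; by rewrite gbasisE nh mul0r.
Qed.

Lemma gr_mulr1 : right_id (gbasis 1%g) (@gr_mul gT).
Proof.
move=> a; apply/ffunP => x; rewrite grmulE (bigD1 x) //= gbasisE mulVg eqxx mulr1.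
rewrite big1 ?addr0 // => h nh; rewrite gbasisE.
case: eqP => [e|]; last by rewrite mulr0.
by move: nh; rewrite -(mulKVg h x) e mulg1 eqxx.
Qed.

Lemma gr_mulDl : left_distributive (@gr_mul gT) +%R.
Proof.
move=> a b c; apply/ffunP => x; rewrite !ffunE -big_split /=.
by apply: eq_bigr => h _; rewrite ffunE mulrDl.
Qed.

Lemma gr_mulDr : right_distributive (@gr_mul gT) +%R.
Proof.
move=> a b c; apply/ffunP => x; rewrite !ffunE -big_split /=.
by apply: eq_bigr => h _; rewrite ffunE mulrDr.
Qed.

End GR.

Definition ZGR (gT : finGroupType) := ZG gT.
HB.instance Definition _ (gT : finGroupType) := GRing.Zmodule.on (ZGR gT).
HB.instance Definition _ (gT : finGroupType) :=
  GRing.Zmodule_isPzRing.Build (ZGR gT) (@gr_mulA gT) (@gr_mul1r gT) (@gr_mulr1 gT)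
    (@gr_mulDl gT) (@gr_mulDr gT).

Section T.
Variable gT : finGroupType.
Lemma grE (a b : ZG gT) : a ** b = (a : ZGR gT) * (b : ZGR gT).
Proof. by []. Qed.
Lemma gr1 : gbasis (1%g : gT) = (1 : ZGR gT).
Proof. by []. Qed.
End T.


Section Gen.
Variable gT : finGroupType.
Local Notation R := (ZGR gT).
Local Notation gb g := (gbasis g : R).
Implicit Types a b c : R.

Lemma evalM a b x : (a * b) x = \sum_(h : gT) a h * b (h^-1 * x)%g.
Proof. by rewrite ffunE. Qed.

Lemma mulgbE a (g x : gT) : (a * gb g) x = a (x * g^-1)%g.
Proof.
rewrite evalM (bigD1 (x * g^-1)%g) //= gbasisE invMg invgK -mulgA mulVg mulg1 eqxx mulr1.
rewrite big1 ?addr0 // => h nh; rewrite gbasisE.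
case: eqP => [e|]; last by rewrite mulr0.
by move: nh; rewrite -e invMg invgK mulVKg eqxx.
Qed.

Lemma gbmulE (g x : gT) a : (gb g * a) x = a (g^-1 * x)%g.
Proof.
rewrite evalM (bigD1 g) //= gbasisE eqxx mul1r.
rewrite big1 ?addr0 // => h /negPf nh; by rewrite gbasisE nh mul0r.
Qed.

Lemma gbM (g h : gT) : gb g * gb h = gb (g * h)%g.
Proof.
apply/ffunP => x; rewrite gbmulE !gbasisE.
by rewrite (can2_eq (mulVKg g) (mulKg g)).
Qed.

Lemma gbX (g : gT) n : gb g ^+ n = gb (g ^+ n)%g.
Proof. elim: n => [|n IH]; first by rewrite expr0 expg0. by rewrite exprS IH gbM expgS. Qed.

Lemma gb1 : gb 1%g = 1.
Proof. by []. Qed.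

Lemma evalZ a z x : (a *~ z) x = a x *~ z.
Proof. exact: ffunMzE. Qed.

Lemma evalN a n x : (a *+ n) x = a x *+ n.
Proof. exact: ffunMnE. Qed.

Lemma evalS I (r : seq I) (P : pred I) (F : I -> R) x :
  (\sum_(i <- r | P i) F i) x = \sum_(i <- r | P i) F i x.
Proof. exact: sum_ffunE. Qed.

Lemma evalB a b x : (a - b) x = a x - b x.
Proof. by rewrite !ffunE. Qed.

Lemma evalD a b x : (a + b) x = a x + b x.
Proof. by rewrite !ffunE. Qed.

Lemma eval0 x : (0 : R) x = 0.
Proof. by rewrite ffunE. Qed.

Definition eps a : int := \sum_(x : gT) a x.

Lemma epsM a b : eps (a * b) = eps a * eps b.
Proof.
rewrite /eps big_distrl /=.
under eq_bigr => x _ do rewrite evalM.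
rewrite exchange_big /=; apply: eq_bigr => h _.
rewrite -big_distrr /=; congr (_ * _).
by rewrite (reindex_inj (mulgI h)) /=; apply: eq_bigr => x _; rewrite mulKg.
Qed.

Lemma epsD a b : eps (a + b) = eps a + eps b.
Proof. by rewrite /eps -big_split; apply: eq_bigr => x _; rewrite evalD. Qed.

Lemma epsZ a z : eps (a *~ z) = eps a *~ z.
Proof. by rewrite /eps mulrz_suml; apply: eq_bigr => x _; rewrite evalZ. Qed.

Lemma epsS I (r : seq I) (P : pred I) (F : I -> R) :
  eps (\sum_(i <- r | P i) F i) = \sum_(i <- r | P i) eps (F i).
Proof. by rewrite /eps exchange_big /=; apply: eq_bigr => x _; rewrite evalS. Qed.

Lemma eps_gb g : eps (gb g) = 1.
Proof.
rewrite /eps (bigD1 g) //= gbasisE eqxx big1 ?addr0 // => h /negPf nh.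
by rewrite gbasisE nh.
Qed.

Definition Tc (g : gT) n : R := \sum_(i < n) gb (g ^+ i)%g.

Lemma Tc_mulr g n : (g ^+ n = 1)%g -> Tc g n * gb g = Tc g n.
Proof.
case: n => [|n] gn; first by rewrite /Tc big_ord0 mul0r.
rewrite /Tc mulr_suml.
under eq_bigr => i _ do rewrite gbM -expgSr.
rewrite big_ord_recr /= gn [RHS]big_ord_recl /= expg0 addrC; congr (_ + _).
Qed.

Lemma Tc_mull g n : (g ^+ n = 1)%g -> gb g * Tc g n = Tc g n.
Proof.
case: n => [|n] gn; first by rewrite /Tc big_ord0 mulr0.
rewrite /Tc mulr_sumr.
under eq_bigr => i _ do rewrite gbM -expgS.
rewrite big_ord_recr /= gn [RHS]big_ord_recl /= expg0 addrC; congr (_ + _).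
Qed.

Lemma Tc_telescope g n : (1 - gb g) * Tc g n = 1 - gb (g ^+ n)%g.
Proof.
elim: n => [|n IH]; first by rewrite /Tc big_ord0 mulr0 expg0 subrr.
rewrite /Tc big_ord_recr /= mulrDr -/(Tc g n) IH mulrBl mul1r gbM -expgS.
by rewrite addrA subrK.
Qed.

Lemma eps_Tc g n : eps (Tc g n) = n%:Z.
Proof.
rewrite /Tc epsS; under eq_bigr => i _ do rewrite eps_gb.
by rewrite sumr_const card_ord natz.
Qed.

End Gen.


Section Gen2.
Variable gT : finGroupType.
Local Notation R := (ZGR gT).
Local Notation gb g := (gbasis g : R).

Lemma one_z (z : int) : (1 : R) *~ z = z%:~R.
Proof. by []. Qed.

Lemma sumS1 (g : gT) K : (g ^+ (K.*2.+1) = 1)%g ->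
  \sum_(i < K.*2.+1) (gb (g ^+ i.+1) + gb (g ^+ (K.*2.+1 - i.+1))) *~ (K%:Z - i%:Z)
  = Tc g (K.*2.+1) - (K.*2.+1)%:R.
Proof.
move=> gn; set n := K.*2.
under eq_bigr => i _ do rewrite mulrzDl.
rewrite big_split /= big_ord_recr /= gn.
have -> : \sum_(i < n.+1) gb (g ^+ (n.+1 - i.+1)) *~ (K%:Z - i%:Z) =
          \sum_(i < n.+1) gb (g ^+ i) *~ (K%:Z - (n - i)%:Z).
  rewrite (reindex_inj rev_ord_inj) /=; apply: eq_bigr => i _.
  have hi := ltn_ord i.
  have -> : (n.+1 - (n.+1 - i.+1).+1 = i)%N by lia.
  by rewrite subSS.
rewrite big_ord_recl /= /Tc big_ord_recl /= expg0 gb1.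
rewrite [X in _ + X]addrC addrACA -big_split /=.
under eq_bigr => i _ do rewrite -mulrzDr.
have hb : forall i : 'I_n, bump 0 i = i.+1 by move=> i; rewrite /bump leq0n add1n.
rewrite [RHS]addrAC [RHS]addrC; congr (_ + _).
  apply: eq_bigr => i _; rewrite hb; have hi := ltn_ord i.
  have -> : (K%:Z - i%:Z) + (K%:Z - (n - i.+1)%:Z) = 1 by lia.
  by [].
rewrite subn0 -intrD -[1]/(1%:~R) -[n.+1%:R]/((n.+1)%:Z%:~R) -intrB.
by congr (_%:~R); lia.
Qed.
Lemma sumS2 (g : gT) K : (g ^+ (K.*2.+1) = 1)%g ->
  \sum_(i < K.*2.+1) (gb (g ^+ i) - gb (g ^+ i.+1)) *~ (K%:Z - i%:Z)
  = (K.*2.+1)%:R - Tc g (K.*2.+1).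
Proof.
move=> gn; set n := K.*2.
under eq_bigr => i _ do rewrite mulrzBl.
rewrite sumrB big_ord_recl big_ord_recr /= gn expg0 gb1 /Tc big_ord_recl /= expg0 gb1.
have hb : forall i : 'I_n, bump 0 i = i.+1 by move=> i; rewrite /bump leq0n add1n.
under eq_bigr => i _ do rewrite hb.
rewrite [X in _ = _ - (_ + X)](eq_bigr (fun i : 'I_n => gb (g ^+ i.+1))); last by move=> i _; rewrite hb.
rewrite opprD [X in X + _]addrC addrACA -sumrB.
have -> : \sum_(i < n) (gb (g ^+ i.+1) *~ (K%:Z - i.+1%:Z) - gb (g ^+ i.+1) *~ (K%:Z - i%:Z)) =
   - \sum_(i < n) gb (g ^+ i.+1).
  rewrite -sumrN; apply: eq_bigr => i _.
  rewrite -mulrzBr.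
  have -> : ((K%:Z - i.+1%:Z) - (K%:Z - i%:Z)) = -1 by lia.
  by rewrite mulrN1z.
rewrite addrC opprD addrA; congr (_ + _).
rewrite -intrB -[1]/(1%:~R) -[n.+1%:R]/((n.+1)%:Z%:~R) -intrB.
by congr (_%:~R); lia.
Qed.

End Gen2.


Section Gen3.
Variable gT : finGroupType.
Local Notation R := (ZGR gT).
Local Notation gb g := (gbasis g : R).

Lemma Tc_add (g : gT) m n : Tc g (m + n) = Tc g m + gb (g ^+ m)%g * Tc g n.
Proof.
rewrite /Tc big_split_ord /= mulr_sumr; congr (_ + _).
by apply: eq_bigr => i _; rewrite gbM -expgD.
Qed.

Lemma gbX_Tc (g : gT) n k : (g ^+ n = 1)%g -> gb (g ^+ k)%g * Tc g n = Tc g n.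
Proof.
move=> gn; rewrite -gbX; elim: k => [|k IH]; first by rewrite expr0 mul1r.
by rewrite exprSr -mulrA Tc_mull.
Qed.

Lemma Tc_gbX (g : gT) n k : (g ^+ n = 1)%g -> Tc g n * gb (g ^+ k)%g = Tc g n.
Proof.
move=> gn; rewrite -gbX; elim: k => [|k IH]; first by rewrite expr0 mulr1.
by rewrite exprS mulrA Tc_mulr.
Qed.

Lemma TcTc (g : gT) n : (g ^+ n = 1)%g -> Tc g n * Tc g n = Tc g n *+ n.
Proof.
move=> gn; rewrite {1}/Tc mulr_suml.
under eq_bigr => i _ do rewrite gbX_Tc //.
by rewrite sumr_const card_ord.
Qed.

End Gen3.

Section Main.
Variables (gT : finGroupType) (tau sigma : gT) (d s : nat) (theta : nat -> nat).
Hypotheses (Hd_odd : odd d) (Hs_even : ~~ odd s) (Htau : #[tau]%g = d) (Hsigma : #[sigma]%g = s)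
 (Hsdprod : (<[tau]> ><| <[sigma]>)%g = [set: gT])
 (Hhalf : (sigma ^+ s./2 * tau * (sigma ^+ s./2)^-1 = tau^-1)%g)
 (Htheta : forall j : nat, (0 < theta j < d)%N /\
      (sigma ^+ j * tau * (sigma ^+ j)^-1 = tau ^+ theta j)%g).

Local Notation R := (ZGR gT).
Local Notation gb g := (gbasis g : R).
Local Notation K := ((d.-1)./2).
Local Notation S' := (sigma ^+ s./2)%g.

Lemma dE : d = K.*2.+1.
Proof.
have h := odd_double_half d; rewrite Hd_odd /= in h.
move: h; set m := d./2 => h.
by rewrite -h add1n -pred_Sn half_double.
Qed.

Lemma hE : (d.+1)./2 = K.+1.
Proof. by rewrite {1}dE -doubleS half_double. Qed.

Lemma sE : s = (s./2 + s./2)%N.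
Proof. by rewrite addnn; have := odd_double_half s; rewrite (negPf Hs_even) add0n. Qed.

Lemma tau_d : (tau ^+ d = 1)%g.
Proof. by rewrite -Htau expg_order. Qed.

Lemma sig_s : (sigma ^+ s = 1)%g.
Proof. by rewrite -Hsigma expg_order. Qed.

Lemma S'2 : (S' * S' = 1)%g.
Proof. by rewrite -expgD -sE sig_s. Qed.

Lemma conj1 : (tau * S' * tau = S')%g.
Proof.
have e : (S' * tau = tau^-1 * S')%g by rewrite -Hhalf mulgVK.
by rewrite -mulgA e mulgA mulgV mul1g.
Qed.

Lemma conjk k : (tau ^+ k * S' * tau ^+ k = S')%g.
Proof.
elim: k => [|k IH]; first by rewrite expg0 mul1g mulg1.
rewrite {1}expgS expgSr.
have -> : (tau * tau ^+ k * S' * (tau ^+ k * tau) = tau * (tau ^+ k * S' * tau ^+ k) * tau)%g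
  by rewrite !mulgA.
by rewrite IH conj1.
Qed.

Lemma swapk k : (k <= d)%N -> (S' * tau ^+ k = tau ^+ (d - k) * S')%g.
Proof.
move=> kd; by rewrite -{2}(conjk k) !mulgA -expgD subnK // tau_d mul1g.
Qed.

Lemma thetaE j : (tau ^+ theta j * sigma ^+ j = sigma ^+ j * tau)%g.
Proof. by have [_ <-] := Htheta j; rewrite mulgVK. Qed.

Lemma sd_ctx : [/\ <[tau]> <| [set: gT], <[tau]> * <[sigma]> = [set: gT] & <[tau]> :&: <[sigma]> = 1]%g.
Proof. by have [? _ ? _ ?] := sdprod_context Hsdprod. Qed.

Lemma decomp (x : gT) : exists a b, [/\ (a < d)%N, (b < s)%N & x = tau ^+ a * sigma ^+ b]%g.
Proof.
have [_ KH _] := sd_ctx.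
have : x \in (<[tau]> * <[sigma]>)%g by rewrite KH inE.
case/mulsgP => y z ya zb ->.
have [a ad ->] := cyclePmin ya; have [b bs ->] := cyclePmin zb.
by exists a, b; rewrite -Htau -Hsigma.
Qed.

Lemma uniq_dec a b i j : (a < d)%N -> (b < s)%N -> (i < d)%N -> (j < s)%N ->
  (tau ^+ i * sigma ^+ j = tau ^+ a * sigma ^+ b)%g -> i = a /\ j = b.
Proof.
move=> ad bs id js e.
have [_ _ ti] := sd_ctx.
have e1 : ((tau ^+ a)^-1 * tau ^+ i = sigma ^+ b * (sigma ^+ j)^-1)%g.
  by rewrite -[LHS](mulgK (sigma ^+ j)%g) -(mulgA _ (tau ^+ i)%g) e mulKg.
have : ((tau ^+ a)^-1 * tau ^+ i)%g \in (<[tau]> :&: <[sigma]>)%g.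
  rewrite inE {2}e1; apply/andP; split.
    by rewrite groupM ?groupV // mem_cycle.
  by rewrite groupM ?groupV // mem_cycle.
rewrite ti => /set1gP /eqP; rewrite -eq_mulVg1 eq_expg_mod_order Htau !modn_small // => /eqP ia.
subst i; split => //.
move: e => /mulgI /eqP; rewrite eq_expg_mod_order Hsigma !modn_small //.
by move/eqP.
Qed.



Lemma Tval (x : gT) : (Tc tau d : R) x = ((x \in <[tau]>%g) : nat)%:Z.
Proof.
rewrite /Tc evalS; under eq_bigr => i _ do rewrite gbasisE.
case: (boolP (x \in <[tau]>%g)) => hx.
  have [a ad ->] := cyclePmin hx; rewrite Htau in ad.
  rewrite (bigD1 (Ordinal ad)) //= eqxx big1 ?addr0 // => i ni.
  rewrite eq_expg_mod_order Htau !modn_small //.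
  by case: eqP => // e; move: ni; rewrite -val_eqE /= e eqxx.
rewrite big1 // => i _; case: eqP => // e; by move: hx; rewrite e mem_cycle.
Qed.

Lemma Tcentral (a : R) : Tc tau d * a = a * Tc tau d.
Proof.
have [nK _ _] := sd_ctx.
apply/ffunP => x; rewrite !evalM.
have inj : injective (fun h : gT => x * h^-1)%g by move=> h1 h2 /mulgI /invg_inj.
rewrite (reindex_inj inj) /=; apply: eq_bigr => h _.
rewrite invMg invgK -mulgA mulVg mulg1 mulrC; congr (_ * _).
rewrite !Tval.
have -> : (h^-1 * x = (x * h^-1) ^ h)%g.
  by rewrite conjgE mulgVK.
rewrite memJ_norm //; apply: (subsetP (normal_norm nK)); by rewrite inE.
Qed.

Lemma rinv (f : R) (g x : gT) : f * gb g = f -> f (x * g)%g = f x.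
Proof. by move=> e; rewrite -{1}e mulgbE mulgK. Qed.

Lemma rinv_pow (f : R) (g x : gT) n : f * gb g = f -> f (x * g ^+ n)%g = f x.
Proof.
move=> e; elim: n => [|n IH]; first by rewrite expg0 mulg1.
by rewrite expgSr mulgA rinv.
Qed.

Lemma decompR (f : R) : f * gb sigma = f ->
  f = (\sum_(i < d) gb (tau ^+ i)%g *~ f (tau ^+ i)%g) * Tc sigma s.
Proof.
move=> e; apply/ffunP => x.
rewrite mulr_suml evalS.
under eq_bigr => i _ do rewrite mulrzAl evalZ /Tc mulr_sumr evalS.
have [a [b [ad bs ->]]] := decomp x.
rewrite rinv_pow // (bigD1 (Ordinal ad)) //= [X in _ + X]big1 ?addr0.
  rewrite (bigD1 (Ordinal bs)) //= [X in _ + X]big1 ?addr0.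
    by rewrite gbM gbasisE eqxx /= intz.
  move=> j nj; rewrite gbM gbasisE; case: eqP => // eq.
  have [_ jb] := uniq_dec ad bs ad (ltn_ord j) (esym eq).
  by move: nj; rewrite -val_eqE /= jb eqxx.
move=> i ni; rewrite big1 ?mul0rz // => j _.
rewrite gbM gbasisE; case: eqP => // eq.
have [ia _] := uniq_dec ad bs (ltn_ord i) (ltn_ord j) (esym eq).
by move: ni; rewrite -val_eqE /= ia eqxx.
Qed.

Local Notation t := (gb tau).
Local Notation w := (gb S').
Local Notation th := (gb (tau ^+ (d.+1)./2)%g).
Local Notation T := (Tc tau d : R).
Local Notation Ts := (Tc sigma s : R).
Local Notation Sx := (\sum_(j < s./2) Tc tau (theta j) * gb (sigma ^+ j)%g).
Local Notation Bv := ((1 - w) * (th * Sx)).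
Local Notation Cv := (\sum_(i < d) (gb (tau ^+ i)%g * th * Ts) *~ (K%:Z - i%:Z)).
Local Notation Y := (- ((1 + w) * th)).

Lemma thit i : th * gb (tau ^+ i)%g * th = gb (tau ^+ i.+1)%g.
Proof.
rewrite !gbM -!expgD.
have -> : ((d.+1)./2 + i + (d.+1)./2 = d + i.+1)%N.
  rewrite hE; have := dE; set k := K; lia.
by rewrite expgD tau_d mul1g.
Qed.

Lemma th2 : th * th = t.
Proof. by have := thit 0; rewrite expg0 gb1 mulr1 expg1. Qed.

Lemma thwth : th * w * th = w.
Proof. by rewrite !gbM conjk. Qed.

Lemma ww : w * w = 1.
Proof. by rewrite gbM S'2. Qed.

Lemma wTs : w * Ts = Ts.
Proof. exact: gbX_Tc sig_s. Qed.

Lemma wBv : w * Bv = - Bv.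
Proof. by rewrite mulrA mulrBr mulr1 ww -opprB mulNr. Qed.

Lemma R1 : Ts * (1 - t) = Y * Bv.
Proof.
have e1 : th * (1 - w) * th = t - w by rewrite mulrBr mulr1 mulrBl th2 thwth.
have e2 : (1 + w) * (t - w) = - ((1 + w) * (1 - t)).
  apply/eqP; rewrite -subr_eq0 opprK -mulrDr.
  have -> : t - w + (1 - t) = 1 - w by rewrite addrC addrA subrK.
  by rewrite mulrDl mul1r mulrBr mulr1 ww addrA subrK subrr.
have e3 : (1 - t) * Sx = Tc sigma s./2 * (1 - t).
  rewrite mulr_sumr /Tc mulr_suml; apply: eq_bigr => j _.
  rewrite mulrA Tc_telescope mulrBl mul1r gbM thetaE -gbM.
  by rewrite mulrBr mulr1.
have e4 : (1 + w) * Tc sigma s./2 = Ts.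
  have -> : Tc sigma s = Tc sigma (s./2 + s./2) by rewrite -sE.
  by rewrite Tc_add mulrDl mul1r.
have -> : Y * Bv = - ((1 + w) * (th * (1 - w) * th) * Sx) by rewrite !mulNr !mulrA.
by rewrite e1 e2 mulNr opprK -mulrA e3 mulrA e4.
Qed.


Lemma S1d : \sum_(i < d) (gb (tau ^+ i.+1)%g + gb (tau ^+ (d - i.+1))%g) *~ (K%:Z - i%:Z)
  = T - d%:R.
Proof.
have := @sumS1 gT tau K; rewrite -dE => ->; [by [] | exact: tau_d].
Qed.

Lemma S2d : \sum_(i < d) (gb (tau ^+ i)%g - gb (tau ^+ i.+1)%g) *~ (K%:Z - i%:Z)
  = d%:R - T.
Proof.
have := @sumS2 gT tau K; rewrite -dE => ->; [by [] | exact: tau_d].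
Qed.

Lemma R2 : Y * Cv = Ts *+ d - T * Ts.
Proof.
rewrite mulr_sumr.
have -> : \sum_(i < d) Y * ((gb (tau ^+ i)%g * th * Ts) *~ (K%:Z - i%:Z)) =
  \sum_(i < d) (- ((gb (tau ^+ i.+1)%g + gb (tau ^+ (d - i.+1))%g) * Ts)) *~ (K%:Z - i%:Z).
  apply: eq_bigr => i _; rewrite mulrzAr; congr (_ *~ _).
  have -> : Y * (gb (tau ^+ i)%g * th * Ts) = - ((1 + w) * (th * gb (tau ^+ i)%g * th) * Ts).
    by rewrite !mulNr !mulrA.
  rewrite thit mulrDl mul1r gbM swapk ?ltn_ord // -gbM mulrDl -mulrA wTs -mulrDl.
  by [].
under eq_bigr => i _ do rewrite mulNrz -mulrzAl.
by rewrite sumrN -mulr_suml S1d mulrBl opprB mulr_natl.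
Qed.

Lemma R3 : Cv * (1 - t) = Bv *+ d - T * Bv.
Proof.
rewrite mulr_suml.
have -> : \sum_(i < d) ((gb (tau ^+ i)%g * th * Ts) *~ (K%:Z - i%:Z)) * (1 - t) =
  \sum_(i < d) ((gb (tau ^+ i)%g - gb (tau ^+ i.+1)%g) * Bv) *~ (K%:Z - i%:Z).
  apply: eq_bigr => i _; rewrite mulrzAl; congr (_ *~ _).
  rewrite -[LHS]mulrA R1.
  have eY : th * Y = - (t + w).
    by rewrite mulrN mulrA mulrDr mulr1 mulrDl th2 thwth.
  have -> : gb (tau ^+ i)%g * th * (Y * Bv) = gb (tau ^+ i)%g * (th * Y) * Bv by rewrite !mulrA.
  rewrite eY mulrN mulNr mulrDr mulrDl -[gb (tau ^+ i)%g * w * _]mulrA wBv gbM -expgSr mulrN.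
  by rewrite opprB [RHS]mulrBl.
under eq_bigr => i _ do rewrite -mulrzAl.
by rewrite -mulr_suml S2d mulrBl mulr_natl.
Qed.

Lemma d_gt0 : (0 < d)%N.
Proof. by rewrite dE. Qed.

Lemma Tt : T * t = T.
Proof. exact: Tc_mulr tau_d. Qed.

Lemma T1t : T * (1 - t) = 0.
Proof. by rewrite mulrBr mulr1 Tt subrr. Qed.

Lemma t1T : (1 - t) * T = 0.
Proof. by rewrite mulrBl mul1r Tc_mull ?tau_d // subrr. Qed.

Lemma TsT_1t : Ts * T * (1 - t) = 0.
Proof. by rewrite -mulrA T1t mulr0. Qed.

Lemma Ts_inv (y : R) : y * Ts * gb sigma = y * Ts.
Proof. by rewrite -mulrA Tc_mulr // sig_s. Qed.

Lemma constR (f : R) : f * gb sigma = f -> f * t = f -> f = (1 *~ f 1%g) * (Ts * T).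
Proof.
move=> fs ft; rewrite {1}(decompR fs).
under eq_bigr => i _ do rewrite -(mul1g (tau ^+ i)%g) (rinv_pow _ _ ft) mul1g.
rewrite -mulrz_suml -Tcentral mulrzAl mulrA mulrzAl mul1r.
by rewrite [RHS]mulrzAl.
Qed.

Lemma mulrn_injR (x y : R) : x *+ d = y *+ d -> x = y.
Proof.
move=> e; apply/ffunP => z; have := congr1 (fun f : R => f z) e; rewrite /= !evalN.
move/eqP; rewrite -subr_eq0 -mulrnBl mulrn_eq0 subr_eq0 => /orP [|/eqP] //.
by rewrite eqn0Ngt d_gt0.
Qed.

Lemma L3 (f a : R) : f * gb sigma = f -> f * (1 - t) = a *+ d ->
  exists2 b, (exists y : R, b = y * Ts) & a = b * (1 - t).
Proof.
move=> fs fa.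
have step i : f (tau ^+ i.+1)%g - f (tau ^+ i)%g = a (tau ^+ i.+1)%g *+ d.
  rewrite -evalN -fa mulrBr mulr1 evalB mulgbE expgSr mulgK //.
have dv i : (d%:Z %| f (tau ^+ i)%g - f 1%g)%Z.
  elim: i => [|i IH]; first by rewrite expg0 subrr dvdz0.
  have -> : f (tau ^+ i.+1)%g - f 1%g = (f (tau ^+ i.+1)%g - f (tau ^+ i)%g) + (f (tau ^+ i)%g - f 1%g)
    by rewrite addrA subrK.
  rewrite step rpredD // pmulrn mulrzz dvdz_mull //.
set q := fun i : 'I_d => ((f (tau ^+ i)%g - f 1%g) %/ d%:Z)%Z.
exists ((\sum_(i < d) gb (tau ^+ i)%g *~ q i) * Ts); first by eexists.
apply: mulrn_injR; rewrite -fa {1}(decompR fs).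
have -> : \sum_(i < d) gb (tau ^+ i)%g *~ f (tau ^+ i)%g =
   (\sum_(i < d) gb (tau ^+ i)%g *~ q i) *+ d + T *~ f 1%g.
  rewrite /Tc mulrz_suml -sumrMnl -big_split /=; apply: eq_bigr => i _.
  rewrite /q pmulrn -mulrzA -mulrzDr divzK //.
  by rewrite subrK.
by rewrite mulrDl mulrDl !mulrzAl !mulrnAl (Tcentral Ts) TsT_1t mul0rz addr0.
Qed.

Local Notation C0 := (\sum_(i < d) (gb (tau ^+ i)%g * th) *~ (K%:Z - i%:Z)).

Lemma CvE : Cv = C0 * Ts.
Proof. by rewrite mulr_suml; apply: eq_bigr => i _; rewrite mulrzAl. Qed.

Lemma sumc : \sum_(i < d) (K%:Z - i%:Z) = 0.
Proof.
have h : \sum_(i < d) (K%:Z - i%:Z) + \sum_(i < d) (K%:Z - i%:Z) = 0.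
  rewrite {2}(reindex_inj rev_ord_inj) -big_split /= big1 // => i _.
  have := ltn_ord i; have := dE; set k := K; move=> dk hi; lia.
lia.
Qed.

Lemma epsCv : eps Cv = 0.
Proof.
rewrite epsS; under eq_bigr => i _ do rewrite epsZ !epsM !eps_gb eps_Tc !mul1r.
by rewrite -mulrz_sumr sumc.
Qed.

Lemma wd (x : R) : x * Bv = 0 -> x * Cv = 0.
Proof.
move=> e.
have fs : x * Cv * gb sigma = x * Cv by rewrite CvE mulrA Ts_inv.
have ft : x * Cv * t = x * Cv.
  apply/eqP; rewrite -subr_eq0 -opprB oppr_eq0 -{1}(mulr1 (x * Cv)) -mulrBr.
  rewrite -mulrA R3 mulrBr mulrnAr e mul0rn sub0r oppr_eq0.
  by rewrite Tcentral mulrA e mul0r.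
have := constR fs ft; set f1 := (x * Cv) 1%g => h.
have : eps (x * Cv) = 0 by rewrite epsM epsCv mulr0.
rewrite h epsM epsZ epsM !eps_Tc eps_gb => /eqP.
rewrite mulf_eq0 => /orP [|/eqP]; last first.
  move=> hz; have s0 : (0 < s)%N by rewrite -Hsigma order_gt0.
  have := d_gt0; nia.
by rewrite intz => /eqP ->; rewrite mulr0z mul0r.
Qed.

Lemma main_R :
  let M1 := fun a : R => exists y : R, a = y * (Ts * T) in
  let M2 := fun a : R => exists y : R, a = y * Ts in
  let M3 := fun a : R => exists y : R, a = y * Bv in
  let M4 := fun a : R => exists y : R, a = y * (Bv * T) in
  ((forall a, M1 a -> M2 a) /\ (forall a, M2 a -> M3 (a * (1 - t))) /\
   (forall a, M3 a -> M4 (a * T)) /\ (forall a, M2 a -> M1 (a * T)) /\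
   (forall a, M4 a -> M3 a)) /\
  ((forall a, M1 a -> a = 0 -> a = 0) /\
   (forall a, M2 a -> (a * (1 - t) = 0 <-> exists2 b, M1 b & a = b)) /\
   (forall a, M3 a -> (a * T = 0 <-> exists2 b, M2 b & a = b * (1 - t))) /\
   (forall a, M4 a -> exists2 b, M3 b & a = b * T)) /\
  (exists h2 : R -> R,
     ((forall x, h2 (x * Bv) = x * Cv) /\
      (forall a, M3 a -> M2 (h2 a)) /\
      (forall (r a b : R), M3 a -> M3 b -> h2 (r * a + b) = r * h2 a + h2 b)) /\
     ((forall a, M1 a -> a * T = a *+ d) /\
      (forall a, M2 a -> a * T + h2 (a * (1 - t)) = a *+ d) /\
      (forall a, M3 a -> h2 a * (1 - t) + a * T = a *+ d) /\
      (forall a, M4 a -> a * T = a *+ d))).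
Proof.
move=> M1 M2 M3 M4.
have TsT : Ts * T = T * Ts by rewrite Tcentral.
have BT : Bv * T = T * Bv by rewrite Tcentral.
have TT : T * T = T *+ d by apply: TcTc; exact: tau_d.
split; last split.
split; [|split; [|split; [|split]]].
- by move=> a [y ->]; exists (y * T); rewrite TsT mulrA.
- by move=> a [y ->]; exists (y * Y); rewrite -[LHS]mulrA R1 [LHS]mulrA.
- by move=> a [y ->]; exists y; rewrite -mulrA.
- by move=> a [y ->]; exists y; rewrite mulrA.
- by move=> a [y ->]; exists (y * T); rewrite BT mulrA.
split; [|split; [|split]].
- by [].
- move=> a [y ->]; split.
    move=> e; exists (y * Ts) => //.
    have ft : y * Ts * t = y * Ts.
      by apply/eqP; rewrite -subr_eq0 -opprB oppr_eq0 -{1}(mulr1 (y * Ts)) -mulrBr e.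
    have := constR (Ts_inv y) ft => ->; by eexists.
  by move=> [b [z ->] ->]; rewrite -mulrA TsT_1t mulr0.
- move=> a [x ->]; split.
    move=> e.
    apply: (@L3 (x * Cv)); first by rewrite CvE mulrA Ts_inv.
    rewrite -mulrA R3 mulrBr mulrnAr.
    have -> : x * (T * Bv) = 0 by rewrite -BT mulrA e.
    by rewrite subr0.
  by move=> [b [z ->] ->]; rewrite -!mulrA t1T !mulr0.
- by move=> a [x ->]; exists (x * Bv); [exists x | rewrite mulrA].
pose h2 := fun a : R => epsilon (inhabits (0 : R)) (fun x : R => a = x * Bv) * Cv.
have h2E x : h2 (x * Bv) = x * Cv.
  rewrite /h2; set x' := epsilon _ _.
  have : x * Bv = x' * Bv by apply: (epsilon_spec (inhabits (0 : R)) (fun x0 : R => x * Bv = x0 * Bv)); exists x.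
  move/eqP; rewrite -subr_eq0 -mulrBl => /eqP /wd; rewrite mulrBl => /eqP.
  by rewrite subr_eq0 => /eqP.
exists h2; split; [split; [|split] | split; [|split; [|split]]].
- exact: h2E.
- by move=> a [x ->]; rewrite h2E CvE mulrA; eexists.
- by move=> r a b [x ->] [y ->]; rewrite mulrA -mulrDl !h2E mulrDl mulrA.
- by move=> a [y ->]; rewrite -mulrA -mulrA TT mulrnAr mulrnAr mulrA.
- move=> a [y ->]; rewrite -[y * Ts * (1 - t)]mulrA R1 [y * (Y * Bv)]mulrA h2E -[y * Y * Cv]mulrA R2.
  rewrite mulrBr mulrnAr -TsT [y * (Ts * T)]mulrA addrC subrK.
  by [].
- move=> a [x ->]; rewrite h2E -[x * Cv * (1 - t)]mulrA R3 mulrBr mulrnAr -BT [x * (Bv * T)]mulrA subrK.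
  by [].
- by move=> a [y ->]; rewrite -!mulrA TT !mulrnAr.
Qed.

Lemma main_Z :
  let T_tau := Ttau tau d in
  let T_sig := Tsig sigma s in
  let B := Bel tau sigma d s theta in
  let C := Cel tau sigma d s in
  let one := @gbasis gT 1%g in
  let M1 := inLI (T_sig ** T_tau) in
  let M2 := inLI T_sig in
  let M3 := inLI B in
  let M4 := inLI (B ** T_tau) in
  let d1 := fun a : ZG gT => a in
  let d2 := fun a : ZG gT => a ** (one - gbasis tau) in
  let d3 := fun a : ZG gT => a ** T_tau in
  let h1 := fun a : ZG gT => a ** T_tau in
  let h3 := fun a : ZG gT => a in
  ((forall a, M1 a -> M2 (d1 a)) /\ (forall a, M2 a -> M3 (d2 a)) /\
   (forall a, M3 a -> M4 (d3 a)) /\ (forall a, M2 a -> M1 (h1 a)) /\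
   (forall a, M4 a -> M3 (h3 a))) /\
  ((forall a, M1 a -> d1 a = 0 -> a = 0) /\
   (forall a, M2 a -> (d2 a = 0 <-> exists2 b, M1 b & a = d1 b)) /\
   (forall a, M3 a -> (d3 a = 0 <-> exists2 b, M2 b & a = d2 b)) /\
   (forall a, M4 a -> exists2 b, M3 b & a = d3 b)) /\
  (exists h2 : ZG gT -> ZG gT,
     ((forall x, h2 (x ** B) = x ** C) /\
      (forall a, M3 a -> M2 (h2 a)) /\
      (forall (r a b : ZG gT), M3 a -> M3 b -> h2 (r ** a + b) = r ** h2 a + h2 b)) /\
     ((forall a, M1 a -> h1 (d1 a) = a *+ d) /\
      (forall a, M2 a -> d1 (h1 a) + h2 (d2 a) = a *+ d) /\
      (forall a, M3 a -> d2 (h2 a) + h3 (d3 a) = a *+ d) /\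
      (forall a, M4 a -> d3 (h3 a) = a *+ d))).
Proof. exact: main_R. Qed.

End Main.


Unset Implicit Arguments.

Theorem theorem6p7 (gT : finGroupType) (tau sigma : gT) (d s : nat)
  (theta : nat -> nat)
  (Hd_odd : odd d) (Hs_even : ~~ odd s) (Hs_dvd : (s %| d.-1)%N)
  (Htau : #[tau]%g = d) (Hsigma : #[sigma]%g = s)
  (Hsdprod : (<[tau]> ><| <[sigma]>)%g = [set: gT])
  (Haut_order : forall k : nat, (0 < k < s)%N ->
      exists2 x : gT, x \in <[tau]>%g & (sigma ^+ k * x * (sigma ^+ k)^-1 != x)%g)
  (Hhalf : (sigma ^+ s./2 * tau * (sigma ^+ s./2)^-1 = tau^-1)%g)
  (Htheta : forall j : nat, (0 < theta j < d)%N /\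
      (sigma ^+ j * tau * (sigma ^+ j)^-1 = tau ^+ theta j)%g) :
  let T_tau := Ttau tau d in
  let T_sig := Tsig sigma s in
  let B := Bel tau sigma d s theta in
  let C := Cel tau sigma d s in
  let one := @gbasis gT 1%g in
  let M1 := inLI (T_sig ** T_tau) in
  let M2 := inLI T_sig in
  let M3 := inLI B in
  let M4 := inLI (B ** T_tau) in
  let d1 := fun a : ZG gT => a in
  let d2 := fun a : ZG gT => a ** (one - gbasis tau) in
  let d3 := fun a : ZG gT => a ** T_tau in
  let h1 := fun a : ZG gT => a ** T_tau in
  let h3 := fun a : ZG gT => a in
  (* the maps d1, d2, d3, h1, h3 land in the stated modules *)
  ((forall a, M1 a -> M2 (d1 a)) /\ (forall a, M2 a -> M3 (d2 a)) /\
   (forall a, M3 a -> M4 (d3 a)) /\ (forall a, M2 a -> M1 (h1 a)) /\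
   (forall a, M4 a -> M3 (h3 a))) /\
  (* (1) exactness of 0 -> M1 -> M2 -> M3 -> M4 -> 0 *)
  ((forall a, M1 a -> d1 a = 0 -> a = 0) /\
   (forall a, M2 a -> (d2 a = 0 <-> exists2 b, M1 b & a = d1 b)) /\
   (forall a, M3 a -> (d3 a = 0 <-> exists2 b, M2 b & a = d2 b)) /\
   (forall a, M4 a -> exists2 b, M3 b & a = d3 b)) /\
  (* (2) h2 is a well-defined Z[G]-module homomorphism M3 -> M2, and
     (3) the prism conditions hold *)
  (exists h2 : ZG gT -> ZG gT,
     ((forall x, h2 (x ** B) = x ** C) /\
      (forall a, M3 a -> M2 (h2 a)) /\
      (forall (r a b : ZG gT), M3 a -> M3 b -> h2 (r ** a + b) = r ** h2 a + h2 b)) /\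
     ((forall a, M1 a -> h1 (d1 a) = a *+ d) /\
      (forall a, M2 a -> d1 (h1 a) + h2 (d2 a) = a *+ d) /\
      (forall a, M3 a -> d2 (h2 a) + h3 (d3 a) = a *+ d) /\
      (forall a, M4 a -> d3 (h3 a) = a *+ d))).
Proof.
exact: (main_Z Hd_odd Hs_even Htau Hsigma Hsdprod Hhalf Htheta).
Qed.
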